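(* Let $\mathbb{K}$ be a field of characteristic $0$, $R=\mathbb{K}[x_1,\dots,x_n]$, and let $I\subseteq R$ be an unmixed ideal with minimal primary decomposition $I=q_1\cap\dots\cap q_r$. For $i=1,\dots,r$ let $N_i$ be a set of Noetherian operators for $q_i$. For each $D\in\bigcup_i N_i$, choose $h_D\in\bigcap_{j:\,D\notin N_j}\sqrt{q_j}\setminus\bigcup_{i:\,D\in N_i}\sqrt{q_i}$. Then $N:=\{h_DD: D\in\bigcup_iN_i\}$ is a set of Noetherian operators for $I$.
   Context: $W_R=R\langle\partial_1,\dots,\partial_n\rangle$ is the Weyl algebra ($\partial_i=\partial/\partial x_i$) acting on $R$, written $D\bullet f$. A set $N\subseteq W_R$ is a set of Noetherian operators for an ideal $J$ if for all $f\in R$: $f\in J\iff D\bullet f\in\sqrt J$ for all $D\in N$. An ideal is unmixed if all its associated primes have the same dimension (in particular it has no embedded primes). An empty intersection of ideals is $R$. *)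

(* Defs.v *)
From HB Require Import structures.
From mathcomp Require Import all_boot all_order all_algebra.
From mathcomp Require Import finmap.
From mathcomp.multinomials Require Import monalg mpoly.

Set Implicit Arguments.
Unset Strict Implicit.
Unset Printing Implicit Defensive.

Import GRing.Theory.
Local Open Scope ring_scope.

Notation PolyR K n := {mpoly K[n]}.

(* The Weyl algebra W_R = R<d_1..d_n>, represented in normal form:
   every element is uniquely a finite sum  sum_a c_a d^a  with coefficients
   c_a in R written on the left of d^a = d_1^a_1 ... d_n^a_n.  We only use
   its left R-module structure (h *: D = h * D in W_R, coefficientwise). *)
Definition Weyl (K : fieldType) (n : nat) := {malg (PolyR K n)['X_{1..n}]}.

Definition wact (K : fieldType) (n : nat) (D : Weyl K n) (f : PolyR K n)
  : PolyR K n :=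
  \sum_(a <- (monalg.msupp D : seq _)) monalg.mcoeff a D * mderivm a f.

Definition is_ideal (K : fieldType) (n : nat) (J : PolyR K n -> Prop) : Prop :=
  [/\ J 0, (forall a b, J a -> J b -> J (a + b)) &
      (forall r a, J a -> J (r * a))].

Definition is_prime (K : fieldType) (n : nat) (P : PolyR K n -> Prop) : Prop :=
  [/\ is_ideal P, ~ P 1 & forall a b, P (a * b) -> P a \/ P b].

Definition is_primary (K : fieldType) (n : nat) (Q : PolyR K n -> Prop) : Prop :=
  [/\ is_ideal Q, ~ Q 1 &
      forall a b, Q (a * b) -> Q a \/ exists k : nat, Q (b ^+ k)].

Definition radical (K : fieldType) (n : nat) (J : PolyR K n -> Prop)
  : PolyR K n -> Prop := fun f => exists k : nat, J (f ^+ k).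

Definition same_ideal (K : fieldType) (n : nat) (J1 J2 : PolyR K n -> Prop) :=
  forall f, J1 f <-> J2 f.

(* Krull dimension of R/P is >= k : there is a chain of primes
   P = P_0 ⊊ P_1 ⊊ ... ⊊ P_k. *)
Definition prime_chain_from (K : fieldType) (n : nat)
  (P : PolyR K n -> Prop) (k : nat) : Prop :=
  exists C : nat -> (PolyR K n -> Prop),
    same_ideal (C 0%N) P /\
    (forall i, (i <= k)%N -> is_prime (C i)) /\
    (forall i, (i < k)%N ->
       (forall f, C i f -> C i.+1 f) /\ exists f, C i.+1 f /\ ~ C i f).

Definition same_dim (K : fieldType) (n : nat) (P1 P2 : PolyR K n -> Prop) :=
  forall k, prime_chain_from P1 k <-> prime_chain_from P2 k.

Definition associated_prime (K : fieldType) (n : nat)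
  (I P : PolyR K n -> Prop) : Prop :=
  is_prime P /\ exists f, same_ideal P (fun g => I (g * f)).

Definition unmixed (K : fieldType) (n : nat) (I : PolyR K n -> Prop) : Prop :=
  forall P1 P2, associated_prime I P1 -> associated_prime I P2 -> same_dim P1 P2.

Definition min_primary_decomposition (K : fieldType) (n r : nat)
  (I : PolyR K n -> Prop) (q : 'I_r -> (PolyR K n -> Prop)) : Prop :=
  [/\ forall i, is_primary (q i),
      same_ideal I (fun f => forall i, q i f),
      (forall i j, i != j -> ~ same_ideal (radical (q i)) (radical (q j))) &
      (forall i, ~ same_ideal I (fun f => forall j, j != i -> q j f))].

Definition noetherian_operators (K : fieldType) (n : nat)
  (J : PolyR K n -> Prop) (N : Weyl K n -> Prop) : Prop :=
  forall f, J f <-> (forall D, N D -> radical J (wact D f)).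

(* Main.v *)
Require Import Defs.
From HB Require Import structures.
From mathcomp Require Import all_boot all_order all_algebra.
From mathcomp Require Import finmap.
From mathcomp.multinomials Require Import monalg mpoly.
From Stdlib Require Import Classical.
Local Open Scope ring_scope.
Import GRing.Theory.

Lemma wactZ (K : fieldType) (n : nat) (c : PolyR K n) (D : Weyl K n) f :
  wact (c *: D) f = c * wact D f.
Proof.
rewrite /wact monalg.msuppZ; case: eqP => [->|_].
  by rewrite mul0r big_nil.
rewrite big_distrr; apply: eq_bigr => a _.
by rewrite monalg.mcoeffZ; exact: (esym (mulrA _ _ _)).
Qed.

Lemma ideal_pow (K : fieldType) (n : nat) (J : PolyR K n -> Prop) g k m :
  is_ideal J -> J (g ^+ k) -> J (g ^+ (k + m)).
Proof. by case=> _ _ hm hk; rewrite exprD mulrC; apply: hm. Qed.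

Lemma rad_mull (K : fieldType) (n : nat) (J : PolyR K n -> Prop) a b :
  is_ideal J -> radical J b -> radical J (a * b).
Proof. by case=> _ _ hm [k hk]; exists k; rewrite exprMn; apply: hm. Qed.

Theorem proposition5p2 (K : fieldType) (charK0 : [pchar K] =i pred0)
  (n r : nat) (I : PolyR K n -> Prop) (q : 'I_r -> (PolyR K n -> Prop))
  (N : 'I_r -> (Weyl K n -> Prop)) (h : Weyl K n -> PolyR K n)
  (hI : is_ideal I) (hunm : unmixed I)
  (hdec : min_primary_decomposition I q)
  (hN : forall i, noetherian_operators (q i) (N i))
  (hh : forall D, (exists i, N i D) ->
          (forall j, ~ N j D -> radical (q j) (h D)) /\
          (forall i, N i D -> ~ radical (q i) (h D))) :
  noetherian_operators I
    (fun E => exists2 D, (exists i, N i D) & E = h D *: D).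
Proof.
case: hdec => hprim hIq _ _.
have qid i : is_ideal (q i) by case: (hprim i).
have radI g : radical I g <-> forall i, radical (q i) g.
  split.
    by move=> [k /hIq hk] i; exists k; apply: hk.
  move=> hg; have [u hu] := fin_all_exists hg.
  exists (\sum_i u i)%N; apply/hIq => i.
  rewrite (bigD1 i) //=; apply: ideal_pow => //; exact: hu.
move=> f; split.
  move=> /hIq hf E [D [i0 hi0] ->]; apply/radI => j.
  rewrite wactZ; have [h1 h2] := hh D (ex_intro _ i0 hi0).
  case: (classic (N j D)) => hj.
    by apply: rad_mull => //; apply: (proj1 (hN j f)) => //; apply: hf.
  have [k hk] := h1 j hj; exists k; rewrite exprMn mulrC.
  by case: (qid j) => _ _ hm; apply: hm.
move=> hf; apply/hIq => i; apply/(hN i) => D hD.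
have hex : exists i, N i D by exists i.
have [_ h2] := hh D hex.
have := hf (h D *: D) (ex_intro2 _ _ D hex erefl).
rewrite wactZ => /radI /(_ i) [k]; rewrite exprMn.
case: (hprim i) => _ _ hp /hp [hk|[m hm]].
  by exfalso; apply: (h2 i hD); exists k.
by exists (k * m)%N; rewrite exprM.
Qed.
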